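(* Suppose $n$ is even, $n_t=n_c=n/2$, and the assignment $W$ is generated by pair-switching rerandomization (PSRR) with threshold $a>0$ and tuning parameter $\gamma\ge0$ (assumed to terminate almost surely). Then the difference-in-means estimator $\widehat\tau=n_t^{-1}\sum_{i:W_i=1}Y_i(1)-n_c^{-1}\sum_{i:W_i=0}Y_i(0)$ satisfies $E(\widehat\tau)=\tau$, where $\tau=n^{-1}\sum_{i=1}^n\{Y_i(1)-Y_i(0)\}$.
   Context: Units $i=1,\dots,n$ have fixed potential outcomes $Y_i(1),Y_i(0)$ and fixed covariates $X_i\in\mathbb R^p$, with sample covariance $S_{XX}=(n-1)^{-1}\sum_i(X_i-\overline X)(X_i-\overline X)^{\mathrm T}$ invertible. Expectation is over the randomness of the design only. For an assignment $W\in\{0,1\}^n$ with $n_t$ ones, $M(W)=n_t(1-n_t/n)(\overline X_t-\overline X_c)^{\mathrm T}S_{XX}^{-1}(\overline X_t-\overline X_c)$ with $\overline X_t=n_t^{-1}\sum_{i:W_i=1}X_i$, $\overline X_c=n_c^{-1}\sum_{i:W_i=0}X_i$. PSRR: draw $W^{(0)}$ uniformly among assignments with $n_t$ ones; set $t=0$, $M^{(0)}=M(W^{(0)})$. While $M^{(t)}>a$: choose uniformly at random one index $i$ with $W^{(t)}_i=1$ and one index $j$ with $W^{(t)}_j=0$, let $W^*$ be $W^{(t)}$ with entries $i,j$ swapped, $M^*=M(W^* )$; with probability $\min\{(M^{(t)}/M^* )^\gamma,1\}$ set $W^{(t+1)}=W^*$, $M^{(t+1)}=M^*$, $t\leftarrow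 t+1$ (otherwise keep the current state and try again). Output $W=W^{(t)}$ once $M^{(t)}\le a$. *)

(* Defs.v *)
From HB Require Import structures.
From mathcomp Require Import all_boot all_order all_algebra.
From mathcomp Require Import all_classical all_reals all_analysis.
Set Implicit Arguments. Unset Strict Implicit. Unset Printing Implicit Defensive.
Import Order.TTheory GRing.Theory Num.Theory.
Import numFieldNormedType.Exports.
Local Open Scope classical_set_scope.
Local Open Scope ring_scope.

(* An assignment W in {0,1}^n : W i = true means unit i is treated. *)
Definition assign (n : nat) := {ffun 'I_n -> bool}.

Definition ntreat n (w : assign n) : nat := #|[pred i | w i]|.

Section PSRR.
Variables (R : realType) (n p : nat).
Variable X : 'I_n -> 'rV[R]_p.

Definition Xbar : 'rV[R]_p := n%:R^-1 *: \sum_(i < n) X i.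

Definition SXX : 'M[R]_p :=
  (n.-1)%:R^-1 *: \sum_(i < n) ((X i - Xbar)^T *m (X i - Xbar)).

Definition Xt (w : assign n) : 'rV[R]_p :=
  (ntreat w)%:R^-1 *: \sum_(i < n | w i) X i.
Definition Xc (w : assign n) : 'rV[R]_p :=
  (n - ntreat w)%:R^-1 *: \sum_(i < n | ~~ w i) X i.

Definition mahal (w : assign n) : R :=
  let nt := (ntreat w)%:R in
  nt * (1 - nt / n%:R) *
  ((Xt w - Xc w) *m invmx SXX *m (Xt w - Xc w)^T) 0 0.

Definition swap (w : assign n) (i j : 'I_n) : assign n :=
  [ffun k => if k == i then w j else if k == j then w i else w k].

(* acceptance probability min{(m/ms)^gamma, 1} with ms = M(Wstar); when ms <= m the ratio is
   >= 1 (or +infinity if ms = 0) and the probability is 1. *)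
Definition accept (gamma m mstar : R) : R :=
  if mstar <= m then 1 else powR (m / mstar) gamma.

(* one-try transition kernel of PSRR: from a state w with M(w) <= a the
   algorithm has stopped (absorbing); otherwise a pair (i, j) with w i = 1,
   w j = 0 is chosen uniformly and the swap is accepted with probability
   accept, otherwise the state is kept. *)
Definition kernel (a gamma : R) (w w' : assign n) : R :=
  if mahal w <= a then (w' == w)%:R
  else
    \sum_(i < n | w i) \sum_(j < n | ~~ w j)
      ((ntreat w)%:R * (n - ntreat w)%:R)^-1 *
      (accept gamma (mahal w) (mahal (swap w i j)) * (w' == swap w i j)%:R
       + (1 - accept gamma (mahal w) (mahal (swap w i j))) * (w' == w)%:R).

Definition init_dist (nt : nat) (w : assign n) : R :=
  if ntreat w == nt then #|[pred v : assign n | ntreat v == nt]|%:R^-1 else 0.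

Fixpoint psrr_dist (nt : nat) (a gamma : R) (k : nat) (w : assign n) : R :=
  match k with
  | 0 => init_dist nt w
  | k'.+1 => \sum_(v : assign n) psrr_dist nt a gamma k' v * kernel a gamma v w
  end.

Definition psrr_stop_prob (nt : nat) (a gamma : R) (k : nat) : R :=
  \sum_(w : assign n | mahal w <= a) psrr_dist nt a gamma k w.

Definition psrr_out (nt : nat) (a gamma : R) (w : assign n) : R :=
  if mahal w <= a then lim (psrr_dist nt a gamma k w @[k --> \oo]) else 0.

End PSRR.

Definition tauhat (R : realType) n (Y1 Y0 : 'I_n -> R) (w : assign n) : R :=
  (ntreat w)%:R^-1 * \sum_(i < n | w i) Y1 i
  - (n - ntreat w)%:R^-1 * \sum_(i < n | ~~ w i) Y0 i.

Definition tau (R : realType) n (Y1 Y0 : 'I_n -> R) : R :=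
  n%:R^-1 * \sum_(i < n) (Y1 i - Y0 i).

(* Main.v *)
Require Import Defs.
From HB Require Import structures.
From mathcomp Require Import all_boot all_order all_algebra.
From mathcomp Require Import all_classical all_reals all_analysis.
From mathcomp Require Import zify ring lra.
Import Order.TTheory GRing.Theory Num.Theory.
Import numFieldNormedType.Exports.
Local Open Scope classical_set_scope.
Local Open Scope ring_scope.
Set Implicit Arguments. Unset Strict Implicit.

Section Aux.
Variables (R : realType) (n p : nat) (X : 'I_n -> 'rV[R]_p).
Hypothesis n_gt0 : (0 < n)%N.

Definition compl (w : assign n) : assign n := [ffun i => ~~ w i].

Lemma compl_inj : injective compl.
Proof.
move=> w v /ffunP H; apply/ffunP => i; have := H i; rewrite !ffunE.
by move/(congr1 negb); rewrite !negbK.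
Qed.

Lemma ntreat_le (w : assign n) : (ntreat w <= n)%N.
Proof. by rewrite /ntreat -[X in (_ <= X)%N]card_ord max_card. Qed.

Lemma ntreat_compl (w : assign n) : ntreat (compl w) = (n - ntreat w)%N.
Proof.
rewrite /ntreat; have h := cardC [pred i | w i]; rewrite card_ord in h.
have h2 : #|[pred i | compl w i]| = #|[predC [pred i | w i]]|.
  by apply: eq_card => i; rewrite !inE ffunE.
rewrite h2; move: h; set A := #|[pred i | w i]|; set B := #|_|; lia.
Qed.

Lemma Xt_compl w : Xt X (compl w) = Xc X w.
Proof.
rewrite /Xt /Xc ntreat_compl; congr (_ *: _).
by apply: eq_bigl => i; rewrite ffunE.
Qed.

Lemma Xc_compl w : Xc X (compl w) = Xt X w.
Proof.
rewrite /Xt /Xc ntreat_compl subKn ?ntreat_le //; congr (_ *: _).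
by apply: eq_bigl => i; rewrite ffunE negbK.
Qed.

Lemma mahal_compl w : mahal X (compl w) = mahal X w.
Proof.
rewrite /mahal Xt_compl Xc_compl ntreat_compl natrB ?ntreat_le //.
have -> : (Xc X w - Xt X w) = - (Xt X w - Xc X w) by rewrite opprB.
rewrite linearN /= !mulNmx !mulmxN opprK; congr (_ * _).
have n0 : (n%:R : R) != 0 by rewrite pnatr_eq0 -lt0n.
by field.
Qed.

Lemma swap_compl (w : assign n) i j : swap (compl w) i j = compl (swap w i j).
Proof.
apply/ffunP => k; rewrite !ffunE.
by case: (k == i); case: (k == j); rewrite ?ffunE.
Qed.

Lemma swapC (w : assign n) i j : swap w i j = swap w j i.
Proof.
apply/ffunP => k; rewrite !ffunE.
case: (eqVneq k i) => [ki|ki]; case: (eqVneq k j) => [kj|kj] //.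
by rewrite -ki -kj.
Qed.

Definition hsw (i j k : 'I_n) : 'I_n :=
  if k == i then j else if k == j then i else k.

Lemma hswK i j : involutive (hsw i j).
Proof.
move=> k; rewrite /hsw.
case: (eqVneq k i) => [->|ki].
  by rewrite eqxx; case: (eqVneq j i) => [->|] //; rewrite eqxx.
case: (eqVneq k j) => [->|kj].
  by rewrite eqxx; case: (eqVneq i j).
by rewrite (negbTE ki) (negbTE kj).
Qed.

Lemma ntreat_swap (w : assign n) i j : ntreat (swap w i j) = ntreat w.
Proof.
rewrite /ntreat -!sum1_card (reindex_inj (inv_inj (hswK i j))).
apply: eq_bigl => k; rewrite !inE ffunE /hsw.
case: (eqVneq k i) => [->|ki].
  by rewrite eqxx; case: (eqVneq j i) => [->|ji]; rewrite ?eqxx // eq_sym (negbTE ji).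
case: (eqVneq k j) => [->|kj]; first by rewrite eqxx.
by rewrite (negbTE ki) (negbTE kj) ?(negbTE ki) ?(negbTE kj).
Qed.

Lemma complE (w : assign n) i : compl w i = ~~ w i.
Proof. by rewrite ffunE. Qed.

Variables (a gamma : R).
Hypothesis a_gt0 : 0 < a.
Hypothesis gamma_ge0 : 0 <= gamma.

Definition Tk (v w s : assign n) : R :=
  ((ntreat v)%:R * (n - ntreat v)%:R)^-1 *
  (accept gamma (mahal X v) (mahal X s) * (w == s)%:R
   + (1 - accept gamma (mahal X v) (mahal X s)) * (w == v)%:R).

Lemma kernelE (v w : assign n) : ~~ (mahal X v <= a) ->
  Defs.kernel X a gamma v w = \sum_(i | v i) \sum_(j | ~~ v j) Tk v w (swap v i j).
Proof. move=> h; rewrite /Defs.kernel (negbTE h); reflexivity. Qed.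

Lemma kernel_abs (v w : assign n) : mahal X v <= a ->
  Defs.kernel X a gamma v w = (w == v)%:R.
Proof. move=> h; rewrite /Defs.kernel h; reflexivity. Qed.

Lemma Tk_compl (v w s : assign n) : Tk (compl v) (compl w) (compl s) = Tk v w s.
Proof.
rewrite /Tk !(inj_eq compl_inj) (mahal_compl v) (mahal_compl s) ntreat_compl.
by rewrite (subKn (ntreat_le v)) [X in X^-1]mulrC.
Qed.

Lemma kernel_compl (v w : assign n) : Defs.kernel X a gamma (compl v) (compl w) = Defs.kernel X a gamma v w.
Proof.
case: (boolP (mahal X v <= a)) => h.
  rewrite !kernel_abs ?(mahal_compl v) //.
  by rewrite (inj_eq compl_inj).
rewrite !kernelE ?(mahal_compl v) //.
transitivity (\sum_(i | compl v i) \sum_(j | ~~ compl v j) Tk v w (swap v i j)).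
  apply: eq_bigr => i _; apply: eq_bigr => j _.
  by rewrite swap_compl Tk_compl.
rewrite exchange_big.
apply: eq_big => [i|i _]; first by rewrite complE negbK.
apply: eq_big => [j|j _]; first by rewrite complE.
by rewrite swapC.
Qed.

Lemma accept_ge0 m ms : 0 < m -> 0 <= accept gamma m ms <= 1.
Proof.
move=> m0; rewrite /accept; case: ifPn => [_|]; first by rewrite ler01 lexx.
rewrite -ltNge => mms.
have ms0 : 0 < ms by apply: lt_trans mms.
rewrite powR_ge0 /=.
have h : 0 < m / ms <= 1.
  by rewrite divr_gt0 //= ler_pdivrMr // mul1r ltW.
by rewrite -(powRr0 (m / ms)) (ger_powR h).
Qed.

Lemma kernel_ge0 (v w : assign n) : 0 <= Defs.kernel X a gamma v w.
Proof.
case: (boolP (mahal X v <= a)) => h; first by rewrite kernel_abs // ler0n.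
rewrite kernelE //.
have m0 : 0 < mahal X v by apply: lt_trans a_gt0 _; rewrite ltNge.
apply: sumr_ge0 => i _; apply: sumr_ge0 => j _.
have /andP[h1 h2] := @accept_ge0 _ (mahal X (swap v i j)) m0.
rewrite /Tk; apply: mulr_ge0; first by rewrite invr_ge0 mulr_ge0.
by apply: addr_ge0; apply: mulr_ge0; rewrite ?subr_ge0 ?ler0n.
Qed.

Variable m : nat.
Hypothesis nm : n = (m + m)%N.

Lemma init_compl (w : assign n) : init_dist R m (compl w) = init_dist R m w.
Proof.
rewrite /init_dist ntreat_compl.
have -> : ((n - ntreat w)%N == m) = (ntreat w == m).
  by apply/eqP/eqP; have := ntreat_le w; lia.
by [].
Qed.

Lemma dist_compl k (w : assign n) : psrr_dist X m a gamma k (compl w) = psrr_dist X m a gamma k w.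
Proof.
elim: k w => [|k IH] w /=; first exact: init_compl.
rewrite (reindex_inj compl_inj); apply: eq_bigr => v _.
by rewrite IH kernel_compl.
Qed.

Lemma dist_supp k (w : assign n) : ntreat w != m -> psrr_dist X m a gamma k w = 0.
Proof.
elim: k w => [|k IH] w hw /=; first by rewrite /init_dist (negbTE hw).
apply: big1 => v _.
case: (eqVneq (ntreat v) m) => hv; last by rewrite IH // mul0r.
have wv : (w == v) = false.
  by apply/negbTE; apply: contra hw => /eqP ->; rewrite hv.
case: (boolP (mahal X v <= a)) => h; first by rewrite kernel_abs // wv mulr0.
rewrite kernelE // big1 ?mulr0 // => i _; rewrite big1 // => j _.
have sw : (w == swap v i j) = false.
  by apply/negbTE; apply: contra hw => /eqP ->; rewrite ntreat_swap hv.
by rewrite /Tk sw wv !mulr0 addr0 mulr0.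
Qed.

Lemma dist_ge0 k (w : assign n) : 0 <= psrr_dist X m a gamma k w.
Proof.
elim: k w => [|k IH] w /=.
  by rewrite /init_dist; case: ifP => // _; rewrite invr_ge0.
by apply: sumr_ge0 => v _; rewrite mulr_ge0 ?kernel_ge0.
Qed.

Lemma dist_incr k (w : assign n) : mahal X w <= a ->
  psrr_dist X m a gamma k w <= psrr_dist X m a gamma k.+1 w.
Proof.
move=> hw /=; rewrite (bigD1 w) // (@kernel_abs w w hw) eqxx mulr1 lerDl.
by apply: sumr_ge0 => v _; rewrite mulr_ge0 ?kernel_ge0 ?dist_ge0.
Qed.

Lemma dist_le_stop k (w : assign n) : mahal X w <= a ->
  psrr_dist X m a gamma k w <= psrr_stop_prob X m a gamma k.
Proof.
move=> hw; rewrite /psrr_stop_prob (bigD1 w) //= lerDl.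
by apply: sumr_ge0 => v _; rewrite dist_ge0.
Qed.

End Aux.

Theorem theorem2 (R : realType) (n p : nat) (X : 'I_n -> 'rV[R]_p)
    (Y1 Y0 : 'I_n -> R) (a gamma : R) :
  (0 < n)%N -> ~~ odd n ->
  SXX X \in unitmx ->
  0 < a -> 0 <= gamma ->
  (* PSRR terminates almost surely *)
  psrr_stop_prob X n./2 a gamma k @[k --> \oo] --> (1 : R) ->
  \sum_(w : assign n) psrr_out X n./2 a gamma w * tauhat Y1 Y0 w = tau Y1 Y0.
Proof.
move=> n0 hodd _ a0 g0 hstop.
set m := n./2.
have nm : n = (m + m)%N.
  by have := odd_double_half n; rewrite (negbTE hodd) add0n -addnn.
have m0 : (0 < m)%N by move: n0; rewrite nm; lia.
pose dist k w := psrr_dist X m a gamma k w.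
pose stop k := psrr_stop_prob X m a gamma k.
have stop_incr : forall k, stop k <= stop k.+1.
  move=> k; apply: ler_sum => w hw; exact: dist_incr.
have hom : {homo stop : k l / (k <= l)%N >-> k <= l}.
  exact/nondecreasing_seqP.
have stop_le1 : forall k, stop k <= 1.
  move=> k; have := nondecreasing_cvgn_le hom (cvgP _ hstop) k.
  by rewrite (cvg_lim (@Rhausdorff R) hstop).
have dist_cvg : forall w, mahal X w <= a -> cvgn (dist^~ w).
  move=> w hw; apply: nondecreasing_is_cvgn.
    by apply/nondecreasing_seqP => k; exact: dist_incr.
  exists 1 => y [k _ <-]; apply: le_trans (stop_le1 k).
  exact: dist_le_stop.
pose D k w := if mahal X w <= a then dist k w else 0.
pose f k := \sum_(w : assign n) D k w * tauhat Y1 Y0 w.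
have f_cvgS : f k @[k --> \oo] --> \sum_(w : assign n) psrr_out X m a gamma w * tauhat Y1 Y0 w.
  rewrite /f; apply: cvg_big; first exact: add_continuous.
  move=> w _; rewrite /D /psrr_out.
  case: ifP => hw.
    by apply: cvgM; [exact: dist_cvg | exact: cvg_cst].
  rewrite mul0r; exact: cvg_cst.
have D_compl : forall k w, D k (compl w) = D k w.
  by move=> k w; rewrite /D (mahal_compl X n0) /dist (dist_compl X n0 a0 g0 nm).
have D_supp : forall k w, ntreat w != m -> D k w = 0.
  by move=> k w h; rewrite /D /dist (dist_supp _ _ _ _ h); case: ifP.
have stopE : forall k, stop k = \sum_(w : assign n) D k w.
  by move=> k; rewrite /stop /psrr_stop_prob big_mkcond.
have mR : (m%:R : R) != 0 by rewrite pnatr_eq0 -lt0n.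
have nR : (n%:R : R) = m%:R + m%:R by rewrite {1}nm natrD.
have fE : forall k, f k = stop k * tau Y1 Y0.
  move=> k.
  pose g (w : assign n) i := (w i)%:R * Y1 i - (~~ w i)%:R * Y0 i.
  have step1 : forall w, D k w * tauhat Y1 Y0 w = D k w * (m%:R^-1 * \sum_i g w i).
    move=> w; case: (eqVneq (ntreat w) m) => h; last by rewrite D_supp // !mul0r.
    congr (_ * _); rewrite /tauhat h.
    have -> : (n - m)%N = m by rewrite nm; lia.
    rewrite -mulrBr; congr (_ * _).
    rewrite /g sumrB [X in X - _]big_mkcond [X in _ - X]big_mkcond /=.
    by congr (_ - _); apply: eq_bigr => i _; case: (w i); rewrite /= ?mul1r ?mul0r.
  have hA : forall i, \sum_(w : assign n) D k w * (w i)%:R = stop k / 2.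
    move=> i.
    have hAB : \sum_(w : assign n) D k w * (~~ w i)%:R = \sum_(w : assign n) D k w * (w i)%:R.
      rewrite (reindex_inj (@compl_inj n)); apply: eq_bigr => w _.
      by rewrite D_compl complE negbK.
    have hs : \sum_(w : assign n) D k w * (w i)%:R + \sum_(w : assign n) D k w * (~~ w i)%:R = stop k.
      rewrite stopE -big_split; apply: eq_bigr => w _.
      by case: (w i); rewrite /= ?mulr1 ?mulr0 ?addr0 ?add0r.
    by rewrite hAB in hs; rewrite -hs; field.
  rewrite /f; under eq_bigr => w _ do rewrite step1.
  transitivity (m%:R^-1 * \sum_i \sum_(w : assign n) D k w * g w i).
    rewrite exchange_big mulr_sumr; apply: eq_bigr => w _.
    by rewrite mulrCA !mulr_sumr.
  transitivity (m%:R^-1 * \sum_i (Y1 i - Y0 i) * (stop k / 2)).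
    congr (_ * _); apply: eq_bigr => i _.
    rewrite /g.
    have hA' := hA i.
    have hB : \sum_(w : assign n) D k w * (~~ w i)%:R = stop k / 2.
      rewrite -hA'; rewrite (reindex_inj (@compl_inj n)); apply: eq_bigr => w _.
      by rewrite D_compl complE negbK.
    transitivity (Y1 i * \sum_(w : assign n) D k w * (w i)%:R
                  - Y0 i * \sum_(w : assign n) D k w * (~~ w i)%:R).
      rewrite !mulr_sumr -sumrB; apply: eq_bigr => w _.
      by rewrite mulrBr !mulrA ![_ * Y1 i]mulrC ![_ * Y0 i]mulrC !mulrA.
    by rewrite hA' hB mulrBl.
  rewrite /tau -mulr_suml nR.
  set s := \sum_i _.
  have -> : (m%:R + m%:R : R) = 2 * m%:R by ring.
  by field.
have f_cvgT : f k @[k --> \oo] --> tau Y1 Y0.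
  have -> : f = (fun k => stop k * tau Y1 Y0) by apply: funext => k; exact: fE.
  rewrite -[X in _ --> X]mul1r.
  by apply: cvgM => //; exact: cvg_cst.
exact: (cvg_unique (@Rhausdorff R) f_cvgS f_cvgT).
Qed.
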